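(* Let $\Omega = [a,b)$ be a bounded interval with periodic boundary conditions, let $k \ge 0$ be an integer, let $T_k$ be the space of real-valued trigonometric polynomials on $\Omega$ of degree at most $k$, let $P$ denote the $L^2(\Omega)$-orthogonal projection onto $T_k$, let $\beta \in \mathbb{R}$ and $\tau > 0$. Let $(v, w, \nu, \omega) \colon I \to T_k^4$ (with $I$ an open time interval) be a continuously differentiable solution of the Fourier Galerkin semidiscretization of the hyperbolic approximation of the nonlinear Schrödinger equation, \[ \begin{aligned} v_t &= -\omega_x - \beta P \bigl( (v^2 + w^2) w \bigr), \\ w_t &= \nu_x + \beta P \bigl( (v^2 + w^2) v \bigr), \\ \tau \nu_t &= w_x - \omega, \\ \tau \omega_t &= -v_x + \nu. \end{aligned} \] Then the mass, momentum, and energy \[ \begin{aligned} \mathcal{M} &= \int_\Omega \left( v^2 + w^2 + \tau \nu^2 + \tau \omega^2 \right) \mathrm{d}x, \\ \mathcal{P} &= \int_\Omega \left( v w_x - v_x w + \tau \nu \omega_x - \tau \nu_x \omega \right) \mathrm{d}x, \\ \mathcal{E} &= \int_\Omega \Bigl( 2 \nu v_x - \nu^2 + 2 \omega w_x - \omega^2 - \frac{\beta}{2} (v^2 + w^2)^2 \Bigr) \mathrm{d}x \end{aligned} \] are constant in time along $(v,w,\nu,\omega)$.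
   Context: This system arises from the hyperbolization $\mathrm{i} q^0_t + q^1_x = -\beta |q^0|^2 q^0$, $\mathrm{i} \tau q^1_t - q^0_x = -q^1$ with $q^0 = v + \mathrm{i} w$, $q^1 = \nu + \mathrm{i}\omega$. The semidiscretization is an ODE on the finite-dimensional space $T_k^4$. *)

(* Defs.v *)
From Stdlib Require Import Reals.
From Coquelicot Require Import Coquelicot.
Open Scope R_scope.

Fixpoint sum1 (g : nat -> R) (k : nat) : R :=
  match k with
  | O => 0
  | S n => sum1 g n + g (S n)
  end.

Definition freq (a b : R) (j : nat) : R := 2 * PI * INR j / (b - a).

Definition in_Tk (a b : R) (k : nat) (f : R -> R) : Prop :=
  exists (c0 : R) (ca cb : nat -> R), forall x : R,
    f x = c0 + sum1 (fun j => ca j * cos (freq a b j * x)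
                             + cb j * sin (freq a b j * x)) k.

(* L^2(Omega)-orthogonal projection onto T_k, written in the orthogonal
   Fourier basis 1, cos(freq j x), sin(freq j x), j = 1..k. *)
Definition Pk (a b : R) (k : nat) (f : R -> R) (x : R) : R :=
  / (b - a) * RInt f a b
  + sum1 (fun j =>
        (2 / (b - a) * RInt (fun y => f y * cos (freq a b j * y)) a b)
          * cos (freq a b j * x)
      + (2 / (b - a) * RInt (fun y => f y * sin (freq a b j * y)) a b)
          * sin (freq a b j * x)) k.

Definition in_I (t0 t1 : Rbar) (t : R) : Prop := Rbar_lt t0 t /\ Rbar_lt t t1.

Definition dt (u : R -> R -> R) (t x : R) : R := Derive (fun s => u s x) t.
Definition dx (u : R -> R -> R) (t x : R) : R := Derive (fun y => u t y) x.

Definition mass (a b tau : R) (v w nu om : R -> R -> R) (t : R) : R :=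
  RInt (fun x => v t x ^ 2 + w t x ^ 2 + tau * nu t x ^ 2 + tau * om t x ^ 2) a b.

Definition momentum (a b tau : R) (v w nu om : R -> R -> R) (t : R) : R :=
  RInt (fun x => v t x * dx w t x - dx v t x * w t x
                 + tau * nu t x * dx om t x - tau * dx nu t x * om t x) a b.

Definition energy (a b beta : R) (v w nu om : R -> R -> R) (t : R) : R :=
  RInt (fun x => 2 * nu t x * dx v t x - nu t x ^ 2
                 + 2 * om t x * dx w t x - om t x ^ 2
                 - beta / 2 * (v t x ^ 2 + w t x ^ 2) ^ 2) a b.

(* Main.v *)
Require Import Defs.
From Stdlib Require Import Reals Lra Lia FunctionalExtensionality.
From Coquelicot Require Import Coquelicot.
Open Scope R_scope.

Lemma sum1_ext_range (g h : nat -> R) (k : nat) :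
  (forall j, (1 <= j <= k)%nat -> g j = h j) -> sum1 g k = sum1 h k.
Proof.
  induction k as [|n IH]; intros H; simpl; [reflexivity|].
  rewrite IH by (intros j Hj; apply H; lia). rewrite H by lia. reflexivity.
Qed.

Lemma sum1_ext (g h : nat -> R) (k : nat) :
  (forall j, g j = h j) -> sum1 g k = sum1 h k.
Proof. intros H; apply sum1_ext_range; intros; apply H. Qed.

Lemma sum1_plus (g h : nat -> R) k :
  sum1 (fun j => g j + h j) k = sum1 g k + sum1 h k.
Proof. induction k; simpl; [lra|rewrite IHk; lra]. Qed.

Lemma sum1_scal (c : R) (g : nat -> R) k :
  sum1 (fun j => c * g j) k = c * sum1 g k.
Proof. induction k; simpl; [lra|rewrite IHk; lra]. Qed.

Lemma sum1_mult_r (g : nat -> R) (c : R) k :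
  sum1 g k * c = sum1 (fun j => g j * c) k.
Proof. induction k; simpl; [lra|rewrite <- IHk; lra]. Qed.

Lemma sum1_zero k : sum1 (fun _ => 0) k = 0.
Proof. induction k; simpl; [lra|rewrite IHk; lra]. Qed.

Lemma sum1_delta (g : nat -> R) k l :
  (1 <= l <= k)%nat -> (forall j, (1 <= j <= k)%nat -> j <> l -> g j = 0) ->
  sum1 g k = g l.
Proof.
  induction k as [|n IH]; intros Hl H; [lia|]. simpl.
  destruct (Nat.eq_dec l (S n)) as [->|Hne].
  - rewrite (sum1_ext_range g (fun _ => 0)). rewrite sum1_zero; lra.
    intros j Hj; apply H; lia.
  - rewrite IH by (try lia; intros j Hj Hjl; apply H; lia).
    rewrite (H (S n)) by lia. lra.
Qed.

Lemma sum1_telescope (S : nat -> R) N :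
  sum1 (fun m => S m - S (m - 1)%nat) N = S N - S O.
Proof.
  induction N; simpl; [lra|]. rewrite IHN. replace (N - 0)%nat with N by lia. lra.
Qed.

Definition Cont (f : R -> R) := forall x, continuity_pt f x.

Lemma Cont_const c : Cont (fun _ => c).
Proof. intros x; apply continuity_pt_const; intros u v; reflexivity. Qed.

Lemma Cont_plus f g : Cont f -> Cont g -> Cont (fun x => f x + g x).
Proof. intros Hf Hg x; apply continuity_pt_plus; auto. Qed.

Lemma Cont_minus f g : Cont f -> Cont g -> Cont (fun x => f x - g x).
Proof. intros Hf Hg x; apply continuity_pt_minus; auto. Qed.

Lemma Cont_mult f g : Cont f -> Cont g -> Cont (fun x => f x * g x).
Proof. intros Hf Hg x; apply continuity_pt_mult; auto. Qed.

Lemma Cont_pow f n : Cont f -> Cont (fun x => f x ^ n).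
Proof.
  intros Hf. induction n; simpl. apply Cont_const. apply Cont_mult; auto.
Qed.

Lemma Cont_cos c : Cont (fun x => cos (c * x)).
Proof.
  intros x. apply (continuity_pt_comp (fun x => c * x) cos).
  apply continuity_pt_mult. apply continuity_pt_const; intros u v; reflexivity.
  apply continuity_pt_id. apply continuity_cos.
Qed.

Lemma Cont_sin c : Cont (fun x => sin (c * x)).
Proof.
  intros x. apply (continuity_pt_comp (fun x => c * x) sin).
  apply continuity_pt_mult. apply continuity_pt_const; intros u v; reflexivity.
  apply continuity_pt_id. apply continuity_sin.
Qed.

Lemma Cont_sum1 (F : nat -> R -> R) k :
  (forall j, Cont (F j)) -> Cont (fun x => sum1 (fun j => F j x) k).
Proof.
  intros H. induction k; simpl. apply Cont_const. apply Cont_plus; auto.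
Qed.

Definition TP (a b : R) (k : nat) (c0 : R) (ca cb : nat -> R) (x : R) : R :=
  c0 + sum1 (fun j => ca j * cos (freq a b j * x) + cb j * sin (freq a b j * x)) k.

Lemma Cont_TP a b k c0 ca cb : Cont (TP a b k c0 ca cb).
Proof.
  unfold TP. apply Cont_plus. apply Cont_const.
  apply (Cont_sum1 (fun j x => ca j * cos (freq a b j * x) + cb j * sin (freq a b j * x))).
  intros j. apply Cont_plus; apply Cont_mult; try apply Cont_const.
  apply Cont_cos. apply Cont_sin.
Qed.

Lemma Cont_cont f : Cont f -> forall x, continuous f x.
Proof. intros H x. apply continuity_pt_filterlim. apply H. Qed.

Lemma Cont_ex_RInt f a b : Cont f -> ex_RInt f a b.
Proof. intros H. apply (@ex_RInt_continuous R_CompleteNormedModule). intros z _. apply Cont_cont; auto. Qed.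

Ltac cont := repeat (match goal with
  | |- Cont (fun _ => _) => first [apply Cont_const | apply Cont_minus | apply Cont_plus | apply Cont_mult | apply Cont_pow | apply Cont_cos | apply Cont_sin | apply Cont_TP | assumption]
  | |- Cont _ => first [assumption | apply Cont_TP | apply Cont_cos | apply Cont_sin]
  end).
Definition Lin (A : (R -> R) -> R) :=
  (forall f g, Cont f -> Cont g -> A (fun x => f x + g x) = A f + A g) /\
  (forall c f, Cont f -> A (fun x => c * f x) = c * A f).

Definition Orth (a b : R) (k : nat) (A : (R -> R) -> R) (Lam : R) :=
  (forall p, (1 <= p <= 2 * k)%nat ->
     A (fun x => cos (freq a b p * x)) = 0 /\ A (fun x => sin (freq a b p * x)) = 0) /\
  A (fun _ => 1) = Lam.

Lemma A_ext (A : (R -> R) -> R) f g : (forall x, f x = g x) -> A f = A g.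
Proof. intros H. f_equal. apply functional_extensionality. exact H. Qed.

Lemma A_zero A : Lin A -> A (fun _ => 0) = 0.
Proof.
  intros [_ Hs]. rewrite (A_ext A (fun _ => 0) (fun x => 0 * (fun _ => 1) x)).
  rewrite Hs. lra. apply Cont_const. intros; simpl; lra.
Qed.

Lemma A_sum1 A (F : nat -> R -> R) k :
  Lin A -> (forall j, Cont (F j)) ->
  A (fun x => sum1 (fun j => F j x) k) = sum1 (fun j => A (F j)) k.
Proof.
  intros HL HF. induction k; simpl.
  - apply A_zero; auto.
  - destruct HL as [Hp _]. rewrite Hp. rewrite IHk. reflexivity.
    apply (Cont_sum1 F k HF). apply HF.
Qed.

Lemma A_TP_mul a b k A c0 ca cb g :
  Lin A -> Cont g ->
  A (fun x => TP a b k c0 ca cb x * g x) =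
  c0 * A g + sum1 (fun j => ca j * A (fun x => cos (freq a b j * x) * g x)
                          + cb j * A (fun x => sin (freq a b j * x) * g x)) k.
Proof.
  intros HL Hg. pose proof HL as [Hp Hs].
  rewrite (A_ext A _ (fun x => c0 * g x + sum1 (fun j =>
     (fun j x => ca j * (cos (freq a b j * x) * g x) + cb j * (sin (freq a b j * x) * g x)) j x) k)).
  2:{ intros x. unfold TP. rewrite Rmult_plus_distr_r, sum1_mult_r. f_equal.
      apply sum1_ext. intros j; ring. }
  rewrite Hp, Hs, A_sum1; auto; try (intros; cont).
  f_equal. apply sum1_ext; intros j. rewrite Hp, !Hs; auto; cont.
  apply (Cont_sum1 (fun j x => ca j * (cos (freq a b j * x) * g x) + cb j * (sin (freq a b j * x) * g x))).
  intros; cont.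
Qed.

Lemma freq_minus a b j l : (l <= j)%nat -> freq a b j - freq a b l = freq a b (j - l).
Proof. intros H. unfold freq. rewrite minus_INR by exact H. unfold Rdiv; ring. Qed.

Lemma freq_plus a b j l : freq a b j + freq a b l = freq a b (j + l).
Proof. unfold freq. rewrite plus_INR. unfold Rdiv; ring. Qed.

Lemma A_cos_diff a b k A Lam j l :
  Lin A -> Orth a b k A Lam -> (1 <= j <= k)%nat -> (1 <= l <= k)%nat ->
  A (fun x => cos ((freq a b j - freq a b l) * x)) = if Nat.eq_dec j l then Lam else 0.
Proof.
  intros HL [HO H1] Hj Hl. destruct (Nat.eq_dec j l) as [->|Hne].
  - rewrite <- H1. apply A_ext. intros x. replace ((freq a b l - freq a b l) * x) with 0 by ring.
    apply cos_0.
  - destruct (Compare_dec.le_lt_dec l j).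
    + rewrite freq_minus by lia. apply HO; lia.
    + rewrite (A_ext A _ (fun x => cos (freq a b (l - j) * x))). apply HO; lia.
      intros x. rewrite <- freq_minus by lia.
      replace ((freq a b j - freq a b l) * x) with (- ((freq a b l - freq a b j) * x)) by ring.
      apply cos_neg.
Qed.

Lemma A_sin_diff a b k A Lam j l :
  Lin A -> Orth a b k A Lam -> (1 <= j <= k)%nat -> (1 <= l <= k)%nat ->
  A (fun x => sin ((freq a b j - freq a b l) * x)) = 0.
Proof.
  intros HL [HO H1] Hj Hl. destruct (Nat.eq_dec j l) as [->|Hne].
  - rewrite (A_ext A _ (fun _ => 0)). apply A_zero; auto.
    intros x. replace ((freq a b l - freq a b l) * x) with 0 by ring. apply sin_0.
  - destruct (Compare_dec.le_lt_dec l j).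
    + rewrite freq_minus by lia. apply HO; lia.
    + rewrite (A_ext A _ (fun x => -1 * sin (freq a b (l - j) * x))).
      destruct HL as [_ Hs]. rewrite Hs. rewrite (proj2 (HO (l - j)%nat ltac:(lia))). ring.
      apply Cont_sin.
      intros x. rewrite <- freq_minus by lia.
      replace ((freq a b j - freq a b l) * x) with (- ((freq a b l - freq a b j) * x)) by ring.
      rewrite sin_neg. ring.
Qed.

Lemma A_cos_sum a b k A Lam j l :
  Orth a b k A Lam -> (1 <= j <= k)%nat -> (1 <= l <= k)%nat ->
  A (fun x => cos ((freq a b j + freq a b l) * x)) = 0 /\
  A (fun x => sin ((freq a b j + freq a b l) * x)) = 0.
Proof.
  intros [HO _] Hj Hl. rewrite freq_plus. apply HO; lia.
Qed.

Lemma Cont_cos' c : Cont (fun x => cos (c * x)). Proof. apply Cont_cos. Qed.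

Lemma A_cc a b k A Lam j l :
  Lin A -> Orth a b k A Lam -> (1 <= j <= k)%nat -> (1 <= l <= k)%nat ->
  A (fun x => cos (freq a b j * x) * cos (freq a b l * x)) = if Nat.eq_dec j l then Lam / 2 else 0.
Proof.
  intros HL HO Hj Hl. pose proof HL as [Hp Hs].
  rewrite (A_ext A _ (fun x => / 2 * cos ((freq a b j - freq a b l) * x) + / 2 * cos ((freq a b j + freq a b l) * x))).
  rewrite Hp, !Hs, (A_cos_diff a b k A Lam j l), (proj1 (A_cos_sum a b k A Lam j l HO Hj Hl)); auto.
  destruct (Nat.eq_dec j l); unfold Rdiv; ring.
  all: try (cont; fail).
  intros x. rewrite !Rmult_minus_distr_r, !Rmult_plus_distr_r, cos_minus, cos_plus. field.
Qed.

Lemma A_ss a b k A Lam j l :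
  Lin A -> Orth a b k A Lam -> (1 <= j <= k)%nat -> (1 <= l <= k)%nat ->
  A (fun x => sin (freq a b j * x) * sin (freq a b l * x)) = if Nat.eq_dec j l then Lam / 2 else 0.
Proof.
  intros HL HO Hj Hl. pose proof HL as [Hp Hs].
  rewrite (A_ext A _ (fun x => / 2 * cos ((freq a b j - freq a b l) * x) + (- / 2) * cos ((freq a b j + freq a b l) * x))).
  rewrite Hp, !Hs, (A_cos_diff a b k A Lam j l), (proj1 (A_cos_sum a b k A Lam j l HO Hj Hl)); auto.
  destruct (Nat.eq_dec j l); unfold Rdiv; ring.
  all: try (cont; fail).
  intros x. rewrite !Rmult_minus_distr_r, !Rmult_plus_distr_r, cos_minus, cos_plus. field.
Qed.

Lemma A_sc a b k A Lam j l :
  Lin A -> Orth a b k A Lam -> (1 <= j <= k)%nat -> (1 <= l <= k)%nat ->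
  A (fun x => sin (freq a b j * x) * cos (freq a b l * x)) = 0.
Proof.
  intros HL HO Hj Hl. pose proof HL as [Hp Hs].
  rewrite (A_ext A _ (fun x => / 2 * sin ((freq a b j - freq a b l) * x) + / 2 * sin ((freq a b j + freq a b l) * x))).
  rewrite Hp, !Hs, (A_sin_diff a b k A Lam j l), (proj2 (A_cos_sum a b k A Lam j l HO Hj Hl)); auto.
  ring.
  all: try (cont; fail).
  intros x. rewrite !Rmult_minus_distr_r, !Rmult_plus_distr_r, sin_minus, sin_plus. field.
Qed.

Lemma A_cs a b k A Lam j l :
  Lin A -> Orth a b k A Lam -> (1 <= j <= k)%nat -> (1 <= l <= k)%nat ->
  A (fun x => cos (freq a b j * x) * sin (freq a b l * x)) = 0.
Proof.
  intros HL HO Hj Hl. rewrite <- (A_sc a b k A Lam l j); auto.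
  apply A_ext; intros; ring.
Qed.

Lemma A_TP a b k A Lam c0 ca cb :
  Lin A -> Orth a b k A Lam -> A (TP a b k c0 ca cb) = Lam * c0.
Proof.
  intros HL HO.
  rewrite (A_ext A _ (fun x => TP a b k c0 ca cb x * (fun _ => 1) x)) by (intros; simpl; ring).
  rewrite A_TP_mul; auto. 2: apply Cont_const.
  rewrite (proj2 HO). rewrite (sum1_ext_range _ (fun _ => 0)). rewrite sum1_zero. ring.
  intros j Hj. destruct HO as [HO _].
  rewrite (A_ext A _ (fun x => cos (freq a b j * x))) by (intros; ring).
  rewrite (A_ext A (fun x => sin _ * _) (fun x => sin (freq a b j * x))) by (intros; ring).
  rewrite (proj1 (HO j ltac:(lia))), (proj2 (HO j ltac:(lia))). ring.
Qed.

Lemma A_TP_cos a b k A Lam c0 ca cb l :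
  Lin A -> Orth a b k A Lam -> (1 <= l <= k)%nat ->
  A (fun x => TP a b k c0 ca cb x * cos (freq a b l * x)) = Lam / 2 * ca l.
Proof.
  intros HL HO Hl. rewrite A_TP_mul; auto. 2: apply Cont_cos.
  rewrite (proj1 ((proj1 HO) l ltac:(lia))).
  rewrite (sum1_delta _ k l); auto.
  - rewrite (A_cc a b k A Lam l l), (A_sc a b k A Lam l l); auto.
    destruct (Nat.eq_dec l l); [ring|congruence].
  - intros j Hj Hjl. rewrite (A_cc a b k A Lam j l), (A_sc a b k A Lam j l); auto.
    destruct (Nat.eq_dec j l); [congruence|ring].
Qed.

Lemma A_TP_sin a b k A Lam c0 ca cb l :
  Lin A -> Orth a b k A Lam -> (1 <= l <= k)%nat ->
  A (fun x => TP a b k c0 ca cb x * sin (freq a b l * x)) = Lam / 2 * cb l.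
Proof.
  intros HL HO Hl. rewrite A_TP_mul; auto. 2: apply Cont_sin.
  rewrite (proj2 ((proj1 HO) l ltac:(lia))).
  rewrite (sum1_delta _ k l); auto.
  - rewrite (A_ss a b k A Lam l l), (A_cs a b k A Lam l l); auto.
    destruct (Nat.eq_dec l l); [ring|congruence].
  - intros j Hj Hjl. rewrite (A_ss a b k A Lam j l), (A_cs a b k A Lam j l); auto.
    destruct (Nat.eq_dec j l); [congruence|ring].
Qed.
Definition AR (a b : R) (f : R -> R) : R := RInt f a b.

Lemma RInt_plus' f g a b : Cont f -> Cont g ->
  RInt (fun x => f x + g x) a b = RInt f a b + RInt g a b.
Proof.
  intros Hf Hg. apply (RInt_plus (V := R_CompleteNormedModule)); apply Cont_ex_RInt; auto.
Qed.

Lemma RInt_scal' c f a b : Cont f -> RInt (fun x => c * f x) a b = c * RInt f a b.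
Proof.
  intros Hf. apply (RInt_scal (V := R_CompleteNormedModule)); apply Cont_ex_RInt; auto.
Qed.

Lemma RInt_minus' f g a b : Cont f -> Cont g ->
  RInt (fun x => f x - g x) a b = RInt f a b - RInt g a b.
Proof.
  intros Hf Hg. apply (RInt_minus (V := R_CompleteNormedModule)); apply Cont_ex_RInt; auto.
Qed.

Lemma Lin_AR a b : Lin (AR a b).
Proof. split; intros; unfold AR. apply RInt_plus'; auto. apply RInt_scal'; auto. Qed.

Lemma freq_period a b p x : a < b -> freq a b p * (x + (b - a)) = freq a b p * x + 2 * INR p * PI.
Proof. intros H. unfold freq. field. lra. Qed.

Lemma freq_b a b p : a < b -> freq a b p * b = freq a b p * a + 2 * INR p * PI.
Proof. intros H. rewrite <- freq_period by auto. f_equal. ring. Qed.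

Lemma freq_neq0 a b p : a < b -> (1 <= p)%nat -> freq a b p <> 0.
Proof.
  intros H Hp. unfold freq. assert (0 < INR p) by (apply lt_0_INR; lia).
  pose proof PI_RGT_0. apply Rgt_not_eq. apply Rlt_gt. unfold Rdiv.
  apply Rmult_lt_0_compat. nra. apply Rinv_0_lt_compat. lra.
Qed.

Lemma RInt_value f df a b : (forall x, is_derive f x (df x)) -> Cont df ->
  RInt df a b = f b - f a.
Proof.
  intros Hd Hc. apply is_RInt_unique.
  apply (is_RInt_derive (V := R_CompleteNormedModule)). intros; apply Hd.
  intros; apply Cont_cont; auto.
Qed.

Lemma Orth_AR a b k : a < b -> Orth a b k (AR a b) (b - a).
Proof.
  intros Hab. split.
  - intros p Hp. pose proof (freq_neq0 a b p Hab ltac:(lia)) as Hm.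
    set (m := freq a b p) in *. split; unfold AR.
    + rewrite (RInt_value (fun x => sin (m * x) / m)).
      * unfold m. rewrite freq_b by auto. rewrite sin_period. field; auto.
      * intros x. auto_derive; auto. field; auto.
      * apply Cont_cos.
    + rewrite (RInt_value (fun x => - cos (m * x) / m)).
      * unfold m. rewrite freq_b by auto. rewrite cos_period. field; auto.
      * intros x. auto_derive; auto. field; auto.
      * apply Cont_sin.
  - unfold AR. rewrite RInt_const. unfold scal; simpl; unfold mult; simpl. ring.
Qed.

Definition NN (k : nat) : nat := (2 * k + 1)%nat.
Definition xpt (a b : R) (k m : nat) : R := a + INR m * (b - a) / INR (NN k).
Definition AD (a b : R) (k : nat) (f : R -> R) : R := sum1 (fun m => f (xpt a b k m)) (NN k).

Lemma Lin_AD a b k : Lin (AD a b k).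
Proof.
  split; intros; unfold AD. apply sum1_plus. apply sum1_scal.
Qed.

Lemma sum1_const c n : sum1 (fun _ => c) n = INR n * c.
Proof. induction n; simpl sum1; [simpl; ring|]. rewrite IHn, S_INR. ring. Qed.

Lemma Orth_AD a b k : a < b -> Orth a b k (AD a b k) (INR (NN k)).
Proof.
  intros Hab. split.
  2:{ unfold AD. rewrite sum1_const. ring. }
  intros p Hp.
  assert (HN : 0 < INR (NN k)) by (apply lt_0_INR; unfold NN; lia).
  assert (HpN : INR p < INR (NN k)) by (apply lt_INR; unfold NN; lia).
  assert (Hp0 : 0 < INR p) by (apply lt_0_INR; lia).
  set (th := 2 * PI * INR p / INR (NN k)).
  set (al := freq a b p * a).
  assert (Hs : 0 < sin (th / 2)).
  { apply sin_gt_0; unfold th; pose proof PI_RGT_0.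
    - apply Rmult_lt_0_compat; [|lra]. unfold Rdiv. apply Rmult_lt_0_compat; [nra|].
      apply Rinv_0_lt_compat; auto.
    - replace (2 * PI * INR p / INR (NN k) / 2) with (PI * (INR p / INR (NN k))) by (field; lra).
      assert (INR p / INR (NN k) < 1). { apply (Rmult_lt_reg_r (INR (NN k))); auto.
        unfold Rdiv. rewrite Rmult_assoc, Rinv_l by lra. lra. }
      nra. }
  assert (Hx : forall m, freq a b p * xpt a b k m = al + INR m * th).
  { intros m. unfold al, th, xpt, freq. field. split; lra. }
  assert (HNth : INR (NN k) * th = 2 * INR p * PI) by (unfold th; field; lra).
  split; unfold AD.
  - apply (Rmult_eq_reg_l (2 * sin (th / 2))); [|lra]. rewrite Rmult_0_r.
    rewrite <- sum1_scal.
    rewrite (sum1_ext_range _ (fun m => (fun m => sin (al + INR m * th + th / 2)) m -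
                                       (fun m => sin (al + INR m * th + th / 2)) (m - 1)%nat)).
    + rewrite sum1_telescope. simpl INR at 2.
      replace (al + INR (NN k) * th + th / 2) with ((al + 0 * th + th / 2) + 2 * INR p * PI)
        by (rewrite HNth; ring).
      rewrite sin_period. ring.
    + intros m Hm. rewrite Hx. rewrite minus_INR by lia. simpl INR.
      replace (al + (INR m - 1) * th + th / 2) with ((al + INR m * th) - th / 2) by lra.
      replace (al + INR m * th + th / 2) with ((al + INR m * th) + th / 2) by lra.
      rewrite sin_plus, sin_minus. ring.
  - apply (Rmult_eq_reg_l (2 * sin (th / 2))); [|lra]. rewrite Rmult_0_r.
    rewrite <- sum1_scal.
    rewrite (sum1_ext_range _ (fun m => (fun m => - cos (al + INR m * th + th / 2)) m -
                                       (fun m => - cos (al + INR m * th + th / 2)) (m - 1)%nat)).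
    + rewrite sum1_telescope. simpl INR at 2.
      replace (al + INR (NN k) * th + th / 2) with ((al + 0 * th + th / 2) + 2 * INR p * PI)
        by (rewrite HNth; ring).
      rewrite cos_period. ring.
    + intros m Hm. rewrite Hx. rewrite minus_INR by lia. simpl INR.
      replace (al + (INR m - 1) * th + th / 2) with ((al + INR m * th) - th / 2) by lra.
      replace (al + INR m * th + th / 2) with ((al + INR m * th) + th / 2) by lra.
      rewrite cos_plus, cos_minus. ring.
Qed.
Lemma Pk_TP a b k f : Pk a b k f =
  TP a b k (/ (b - a) * RInt f a b)
    (fun j => 2 / (b - a) * RInt (fun y => f y * cos (freq a b j * y)) a b)
    (fun j => 2 / (b - a) * RInt (fun y => f y * sin (freq a b j * y)) a b).
Proof. reflexivity. Qed.

Lemma Cont_Pk a b k f : Cont (Pk a b k f).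
Proof. rewrite Pk_TP. apply Cont_TP. Qed.

Lemma RInt_ext_R (f g : R -> R) a b : (forall x, f x = g x) -> RInt f a b = RInt g a b.
Proof. intros H. f_equal. apply functional_extensionality; auto. Qed.

Lemma proj_id a b k c0 ca cb f : a < b -> Cont f ->
  RInt (fun x => TP a b k c0 ca cb x * Pk a b k f x - TP a b k c0 ca cb x * f x) a b = 0.
Proof.
  intros Hab Hf.
  rewrite RInt_minus'. 2,3: apply Cont_mult; auto; try apply Cont_TP; apply Cont_Pk.
  change (AR a b (fun x => TP a b k c0 ca cb x * Pk a b k f x) -
          AR a b (fun x => TP a b k c0 ca cb x * f x) = 0).
  pose proof (Lin_AR a b) as HL. pose proof (Orth_AR a b k Hab) as HO.
  rewrite !(A_TP_mul a b k); auto. 2: apply Cont_Pk.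
  rewrite Pk_TP. rewrite (A_TP a b k _ (b - a)); auto.
  rewrite (sum1_ext_range (fun j => ca j * _ + _)
     (fun j => ca j * AR a b (fun x => cos (freq a b j * x) * f x) +
               cb j * AR a b (fun x => sin (freq a b j * x) * f x))).
  { unfold AR. field. lra. }
  intros j Hj.
  rewrite (A_ext (AR a b) (fun x => cos _ * _) (fun x => TP a b k (/ (b - a) * RInt f a b)
    (fun j => 2 / (b - a) * RInt (fun y => f y * cos (freq a b j * y)) a b)
    (fun j => 2 / (b - a) * RInt (fun y => f y * sin (freq a b j * y)) a b) x * cos (freq a b j * x)))
    by (intros; ring).
  rewrite (A_ext (AR a b) (fun x => sin _ * _) (fun x => TP a b k (/ (b - a) * RInt f a b)
    (fun j => 2 / (b - a) * RInt (fun y => f y * cos (freq a b j * y)) a b)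
    (fun j => 2 / (b - a) * RInt (fun y => f y * sin (freq a b j * y)) a b) x * sin (freq a b j * x)))
    by (intros; ring).
  rewrite (A_TP_cos a b k _ (b - a)), (A_TP_sin a b k _ (b - a)); auto.
  unfold AR.
  rewrite (RInt_ext_R (fun x => cos _ * f x) (fun y => f y * cos (freq a b j * y))) by (intros; ring).
  rewrite (RInt_ext_R (fun x => sin _ * f x) (fun y => f y * sin (freq a b j * y))) by (intros; ring).
  field. lra.
Qed.

Definition CD0 a b k (f : R -> R) := / INR (NN k) * AD a b k f.
Definition CDa a b k (f : R -> R) (j : nat) :=
  2 / INR (NN k) * AD a b k (fun x => f x * cos (freq a b j * x)).
Definition CDb a b k (f : R -> R) (j : nat) :=
  2 / INR (NN k) * AD a b k (fun x => f x * sin (freq a b j * x)).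

Lemma reconstruct a b k f : a < b -> in_Tk a b k f ->
  forall x, f x = TP a b k (CD0 a b k f) (CDa a b k f) (CDb a b k f) x.
Proof.
  intros Hab [c0 [ca [cb Hf]]].
  assert (HN : 0 < INR (NN k)) by (apply lt_0_INR; unfold NN; lia).
  pose proof (Lin_AD a b k) as HL. pose proof (Orth_AD a b k Hab) as HO.
  assert (E : f = TP a b k c0 ca cb) by (apply functional_extensionality; exact Hf).
  intros x. rewrite Hf. unfold TP. unfold CD0, CDa, CDb. rewrite E.
  rewrite (A_TP a b k _ (INR (NN k))); auto. f_equal. field; lra.
  apply sum1_ext_range. intros j Hj.
  fold (TP a b k c0 ca cb).
  rewrite (A_TP_cos a b k _ (INR (NN k))), (A_TP_sin a b k _ (INR (NN k))); auto.
  field; lra.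
Qed.
Lemma isd_plus (f g : R -> R) x df dg : is_derive f x df -> is_derive g x dg ->
  is_derive (fun y => f y + g y) x (df + dg).
Proof. intros; apply (is_derive_plus f g); auto. Qed.

Lemma isd_minus (f g : R -> R) x df dg : is_derive f x df -> is_derive g x dg ->
  is_derive (fun y => f y - g y) x (df - dg).
Proof. intros; apply (is_derive_minus f g); auto. Qed.

Lemma isd_mult (f g : R -> R) x df dg : is_derive f x df -> is_derive g x dg ->
  is_derive (fun y => f y * g y) x (df * g x + f x * dg).
Proof. intros; apply (is_derive_mult f g); auto. intros; apply Rmult_comm. Qed.

Lemma isd_const (c x : R) : is_derive (fun _ => c) x 0.
Proof. apply (is_derive_const c). Qed.

Lemma isd_scal (c : R) (f : R -> R) x df : is_derive f x df -> is_derive (fun y => c * f y) x (c * df).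
Proof. apply is_derive_scal. Qed.

Lemma isd_pow (f : R -> R) (x df : R) n : is_derive f x df ->
  is_derive (fun y => f y ^ S n) x (INR (S n) * df * f x ^ n).
Proof.
  intros H. induction n.
  - simpl. eapply is_derive_ext. intros; symmetry; apply Rmult_1_r.
    replace (1 * df * 1) with df by ring. exact H.
  - eapply is_derive_ext. intros t; reflexivity.
    replace (INR (S (S n)) * df * f x ^ S n) with (df * f x ^ S n + f x * (INR (S n) * df * f x ^ n)).
    apply isd_mult; auto. rewrite !S_INR. simpl. ring.
Qed.

Lemma isd_sum1 (F : nat -> R -> R) (dF : nat -> R) t n :
  (forall j, (1 <= j <= n)%nat -> is_derive (F j) t (dF j)) ->
  is_derive (fun u => sum1 (fun j => F j u) n) t (sum1 dF n).
Proof.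
  induction n as [|n IH]; intros H; simpl.
  - apply isd_const.
  - apply isd_plus. apply IH; intros; apply H; lia. apply H; lia.
Qed.

Lemma isd_TP_x a b k c0 ca cb x :
  is_derive (TP a b k c0 ca cb) x
    (TP a b k 0 (fun j => freq a b j * cb j) (fun j => - freq a b j * ca j) x).
Proof.
  unfold TP. apply isd_plus. apply isd_const.
  apply (isd_sum1 (fun j x => ca j * cos (freq a b j * x) + cb j * sin (freq a b j * x))).
  intros j _. auto_derive; auto. ring.
Qed.

Lemma isd_TP_t a b k (c0 : R -> R) (ca cb : R -> nat -> R) d0 da db t x :
  is_derive c0 t d0 ->
  (forall j, (1 <= j <= k)%nat -> is_derive (fun u => ca u j) t (da j)) ->
  (forall j, (1 <= j <= k)%nat -> is_derive (fun u => cb u j) t (db j)) ->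
  is_derive (fun u => TP a b k (c0 u) (ca u) (cb u) x) t (TP a b k d0 da db x).
Proof.
  intros H0 Ha Hb. unfold TP. apply isd_plus; auto.
  apply (isd_sum1 (fun j u => ca u j * cos (freq a b j * x) + cb u j * sin (freq a b j * x))).
  intros j Hj. apply isd_plus.
  apply (isd_mult (fun u => ca u j) (fun _ => cos (freq a b j * x)) t (da j) 0) in Ha; auto.
  replace (da j * cos (freq a b j * x)) with (da j * cos (freq a b j * x) + ca t j * 0) by ring.
  apply Ha. apply isd_const.
  apply (isd_mult (fun u => cb u j) (fun _ => sin (freq a b j * x)) t (db j) 0) in Hb; auto.
  replace (db j * sin (freq a b j * x)) with (db j * sin (freq a b j * x) + cb t j * 0) by ring.
  apply Hb. apply isd_const.
Qed.

Lemma TP_period a b k c0 ca cb : a < b -> TP a b k c0 ca cb b = TP a b k c0 ca cb a.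
Proof.
  intros H. unfold TP. f_equal. apply sum1_ext. intros j.
  rewrite freq_b by auto. rewrite sin_period, cos_period. reflexivity.
Qed.

Lemma c2d_sum1 (F : nat -> R -> R -> R) t x n :
  (forall j, (1 <= j <= n)%nat -> continuity_2d_pt (F j) t x) ->
  continuity_2d_pt (fun u v => sum1 (fun j => F j u v) n) t x.
Proof.
  induction n as [|n IH]; intros H; simpl.
  - apply continuity_2d_pt_const.
  - apply (continuity_2d_pt_plus (fun u v => sum1 (fun j => F j u v) n) (F (S n))).
    apply IH; intros; apply H; lia. apply H; lia.
Qed.

Lemma c2d_1 (g : R -> R) t x : continuity_pt g t -> continuity_2d_pt (fun u v => g u) t x.
Proof.
  intros H. apply (continuity_1d_2d_pt_comp g (fun u v => u)). exact H.
  apply continuity_2d_pt_id1.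
Qed.

Lemma c2d_cos c t x : continuity_2d_pt (fun u v => cos (c * v)) t x.
Proof.
  apply (continuity_1d_2d_pt_comp cos (fun u v => c * v)). apply continuity_cos.
  apply (continuity_2d_pt_mult (fun _ _ => c) (fun u v => v)).
  apply continuity_2d_pt_const. apply continuity_2d_pt_id2.
Qed.

Lemma c2d_sin c t x : continuity_2d_pt (fun u v => sin (c * v)) t x.
Proof.
  apply (continuity_1d_2d_pt_comp sin (fun u v => c * v)). apply continuity_sin.
  apply (continuity_2d_pt_mult (fun _ _ => c) (fun u v => v)).
  apply continuity_2d_pt_const. apply continuity_2d_pt_id2.
Qed.

Lemma c2d_TP a b k (c0 : R -> R) (ca cb : R -> nat -> R) t x :
  continuity_pt c0 t ->
  (forall j, (1 <= j <= k)%nat -> continuity_pt (fun u => ca u j) t) ->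
  (forall j, (1 <= j <= k)%nat -> continuity_pt (fun u => cb u j) t) ->
  continuity_2d_pt (fun u v => TP a b k (c0 u) (ca u) (cb u) v) t x.
Proof.
  intros H0 Ha Hb. unfold TP.
  apply (continuity_2d_pt_plus (fun u v => c0 u)). apply c2d_1; auto.
  apply (c2d_sum1 (fun j u v => ca u j * cos (freq a b j * v) + cb u j * sin (freq a b j * v))).
  intros j Hj.
  apply (continuity_2d_pt_plus (fun u v => ca u j * cos (freq a b j * v))).
  apply (continuity_2d_pt_mult (fun u v => ca u j)). apply c2d_1; auto. apply c2d_cos.
  apply (continuity_2d_pt_mult (fun u v => cb u j)). apply c2d_1; auto. apply c2d_sin.
Qed.

Lemma I_locally t0 t1 t : in_I t0 t1 t -> locally t (fun u => in_I t0 t1 u).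
Proof.
  intros H. apply (locally_open (T := R_UniformSpace) (fun u : R => Rbar_lt t0 u /\ Rbar_lt u t1)).
  apply open_and. apply open_Rbar_gt. apply open_Rbar_lt.
  intros; auto. exact H.
Qed.
Lemma cpt_sum1 (F : nat -> R -> R) t n :
  (forall j, (1 <= j <= n)%nat -> continuity_pt (F j) t) ->
  continuity_pt (fun u => sum1 (fun j => F j u) n) t.
Proof.
  induction n as [|n IH]; intros H; simpl.
  - apply continuity_pt_const. intros u v; reflexivity.
  - apply continuity_pt_plus. apply IH; intros; apply H; lia. apply H; lia.
Qed.

Lemma cpt_scal c (f : R -> R) t : continuity_pt f t -> continuity_pt (fun u => c * f u) t.
Proof. intros H. apply continuity_pt_scal with (f := f); auto. Qed.

Lemma cpt_mult_const (f : R -> R) c t : continuity_pt f t -> continuity_pt (fun u => f u * c) t.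
Proof.
  intros H. apply continuity_pt_mult; auto. apply continuity_pt_const; intros u v; reflexivity.
Qed.

Definition val a b k (Y : R -> R -> R) (u x : R) : R :=
  TP a b k (CD0 a b k (Y u)) (CDa a b k (Y u)) (CDb a b k (Y u)) x.
Definition dv a b k (Y : R -> R -> R) (u x : R) : R :=
  TP a b k 0 (fun j => freq a b j * CDb a b k (Y u) j) (fun j => - freq a b j * CDa a b k (Y u) j) x.

Lemma coef_deriv a b k (X : R -> R -> R) t :
  (forall x, ex_derive (fun s => X s x) t) ->
  is_derive (fun u => CD0 a b k (X u)) t (CD0 a b k (dt X t)) /\
  (forall j, is_derive (fun u => CDa a b k (X u) j) t (CDa a b k (dt X t) j)) /\
  (forall j, is_derive (fun u => CDb a b k (X u) j) t (CDb a b k (dt X t) j)).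
Proof.
  intros H. unfold CD0, CDa, CDb, AD. split; [|split]; [|intros j..];
  apply isd_scal; apply (isd_sum1 (fun m u => _)); intros m _.
  - apply Derive_correct; auto.
  - match goal with |- is_derive _ _ (?d * ?c) =>
      replace (d * c) with (d * c + X t (xpt a b k m) * 0) by ring;
      apply (isd_mult (fun u => X u (xpt a b k m)) (fun _ => c)) end.
    apply Derive_correct; auto. apply isd_const.
  - match goal with |- is_derive _ _ (?d * ?c) =>
      replace (d * c) with (d * c + X t (xpt a b k m) * 0) by ring;
      apply (isd_mult (fun u => X u (xpt a b k m)) (fun _ => c)) end.
    apply Derive_correct; auto. apply isd_const.
Qed.

Lemma coef_cont a b k (Y : R -> R -> R) t :
  (forall x, continuity_pt (fun s => Y s x) t) ->
  continuity_pt (fun u => CD0 a b k (Y u)) t /\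
  (forall j, continuity_pt (fun u => CDa a b k (Y u) j) t) /\
  (forall j, continuity_pt (fun u => CDb a b k (Y u) j) t).
Proof.
  intros H. unfold CD0, CDa, CDb, AD. split; [|split]; [|intros j..];
  apply cpt_scal; apply (cpt_sum1 (fun m u => _)); intros m _.
  - apply H.
  - apply (cpt_mult_const (fun u => Y u (xpt a b k m))). apply H.
  - apply (cpt_mult_const (fun u => Y u (xpt a b k m))). apply H.
Qed.

Lemma val_dt a b k X t x : (forall x, ex_derive (fun s => X s x) t) ->
  is_derive (fun u => val a b k X u x) t (val a b k (dt X) t x).
Proof.
  intros H. destruct (coef_deriv a b k X t H) as [H0 [Ha Hb]].
  unfold val. apply (isd_TP_t a b k (fun u => CD0 a b k (X u)) (fun u => CDa a b k (X u))
     (fun u => CDb a b k (X u))); auto.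
Qed.

Lemma dv_dt a b k X t x : (forall x, ex_derive (fun s => X s x) t) ->
  is_derive (fun u => dv a b k X u x) t (dv a b k (dt X) t x).
Proof.
  intros H. destruct (coef_deriv a b k X t H) as [H0 [Ha Hb]].
  unfold dv. apply (isd_TP_t a b k (fun u => 0) (fun u j => freq a b j * CDb a b k (X u) j)
     (fun u j => - freq a b j * CDa a b k (X u) j)).
  apply isd_const. intros; apply isd_scal; auto. intros; apply isd_scal; auto.
Qed.

Lemma val_dx a b k Y u x : is_derive (val a b k Y u) x (dv a b k Y u x).
Proof. apply isd_TP_x. Qed.

Lemma val_c2d a b k Y t x : (forall x, continuity_pt (fun s => Y s x) t) ->
  continuity_2d_pt (fun u v => val a b k Y u v) t x.
Proof.
  intros H. destruct (coef_cont a b k Y t H) as [H0 [Ha Hb]].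
  unfold val. apply (c2d_TP a b k (fun u => CD0 a b k (Y u)) (fun u => CDa a b k (Y u))
     (fun u => CDb a b k (Y u))); auto.
Qed.

Lemma dv_c2d a b k Y t x : (forall x, continuity_pt (fun s => Y s x) t) ->
  continuity_2d_pt (fun u v => dv a b k Y u v) t x.
Proof.
  intros H. destruct (coef_cont a b k Y t H) as [H0 [Ha Hb]].
  unfold dv. apply (c2d_TP a b k (fun u => 0) (fun u j => freq a b j * CDb a b k (Y u) j)
     (fun u j => - freq a b j * CDa a b k (Y u) j)).
  apply continuity_pt_const; intros u v; reflexivity.
  intros; apply cpt_scal; auto. intros; apply cpt_scal; auto.
Qed.

Lemma deriv_RInt (f g : R -> R -> R) a b t (P : R -> Prop) :
  locally t P ->
  (forall u x, P u -> is_derive (fun s => f s x) u (g u x)) ->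
  (forall x, continuity_2d_pt g t x) ->
  (forall u, Cont (f u)) ->
  is_derive (fun u => RInt (f u) a b) t (RInt (g t) a b).
Proof.
  intros HP Hd Hc Hf.
  assert (HPt : P t) by (apply locally_singleton; auto).
  replace (RInt (g t) a b) with (RInt (fun x => Derive (fun u => f u x) t) a b).
  2:{ apply RInt_ext_R. intros x. apply is_derive_unique. apply Hd; auto. }
  apply (is_derive_RInt_param f a b t).
  - apply (filter_imp P); auto. intros u Hu x _. eexists. apply Hd; auto.
  - intros x _. apply (continuity_2d_pt_ext_loc g). 2: apply Hc.
    destruct HP as [eps Heps]. exists eps. intros u v Hu _.
    symmetry. apply is_derive_unique. apply Hd. apply Heps. exact Hu.
  - apply filter_forall. intros y. apply Cont_ex_RInt; auto.
Qed.

Lemma const_on_I (F : R -> R) t0 t1 :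
  (forall t, in_I t0 t1 t -> is_derive F t 0) ->
  forall t s, in_I t0 t1 t -> in_I t0 t1 s -> F t = F s.
Proof.
  intros H t s Ht Hs.
  assert (Hconv : forall x, Rmin t s <= x <= Rmax t s -> in_I t0 t1 x).
  { intros x Hx. unfold Rmin, Rmax in Hx. destruct Ht as [Ht1 Ht2], Hs as [Hs1 Hs2].
    split.
    - destruct t0 as [r| |]; simpl in *; auto. destruct (Rle_dec t s); lra.
    - destruct t1 as [r| |]; simpl in *; auto. destruct (Rle_dec t s); lra. }
  destruct (MVT_gen F t s (fun _ => 0)) as [c [_ Hc]].
  - intros x Hx. apply H. apply Hconv. lra.
  - intros x Hx. apply continuity_pt_filterlim. apply (ex_derive_continuous F).
    eexists. apply H. apply Hconv. auto.
  - lra.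
Qed.
Lemma isd_eq (f : R -> R) x d d' : is_derive f x d -> d = d' -> is_derive f x d'.
Proof. intros H ->; exact H. Qed.

Lemma isd_pow2 (f : R -> R) (x df : R) : is_derive f x df ->
  is_derive (fun y => f y ^ 2) x (2 * f x * df).
Proof.
  intros H. eapply isd_eq. apply (isd_pow f x df 1); auto. simpl. ring.
Qed.

Lemma c2d_pow2 (f : R -> R -> R) t x : continuity_2d_pt f t x ->
  continuity_2d_pt (fun u v => f u v ^ 2) t x.
Proof.
  intros H. apply (continuity_2d_pt_ext (fun u v => f u v * (f u v * 1))).
  intros; simpl; ring.
  apply (continuity_2d_pt_mult f). auto.
  apply (continuity_2d_pt_mult f). auto. apply continuity_2d_pt_const.
Qed.

Lemma Cont_val a b k Y u : Cont (val a b k Y u).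
Proof. apply Cont_TP. Qed.
Lemma Cont_dv a b k Y u : Cont (dv a b k Y u).
Proof. apply Cont_TP. Qed.

Lemma val_period a b k Y u : a < b -> val a b k Y u b = val a b k Y u a.
Proof. intros; apply TP_period; auto. Qed.
Lemma dv_period a b k Y u : a < b -> dv a b k Y u b = dv a b k Y u a.
Proof. intros; apply TP_period; auto. Qed.

Lemma field_facts a b k t0 t1 (X : R -> R -> R) : a < b ->
  (forall t, in_I t0 t1 t -> in_Tk a b k (X t)) ->
  (forall t x, in_I t0 t1 t -> ex_derive (fun s => X s x) t) ->
  (forall t x, in_I t0 t1 t -> continuous (fun s => dt X s x) t) ->
  forall t, in_I t0 t1 t ->
  (forall x, X t x = val a b k X t x) /\
  (forall x, dx X t x = dv a b k X t x) /\
  (forall x, dt X t x = val a b k (dt X) t x) /\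
  (forall x, is_derive (fun s => val a b k X s x) t (val a b k (dt X) t x)) /\
  (forall x, is_derive (fun s => dv a b k X s x) t (dv a b k (dt X) t x)) /\
  (forall x, continuity_2d_pt (fun u v => val a b k X u v) t x) /\
  (forall x, continuity_2d_pt (fun u v => dv a b k X u v) t x) /\
  (forall x, continuity_2d_pt (fun u v => val a b k (dt X) u v) t x) /\
  (forall x, continuity_2d_pt (fun u v => dv a b k (dt X) u v) t x).
Proof.
  intros Hab HT Hex Hct t Ht.
  assert (E1 : forall u, in_I t0 t1 u -> forall x, X u x = val a b k X u x).
  { intros u Hu x. apply reconstruct; auto. }
  assert (Hc1 : forall x, continuity_pt (fun s => X s x) t).
  { intros x. apply continuity_pt_filterlim. apply (ex_derive_continuous (fun s => X s x)). auto. }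
  assert (Hc2 : forall x, continuity_pt (fun s => dt X s x) t).
  { intros x. apply continuity_pt_filterlim. apply Hct; auto. }
  assert (D1 : forall x, is_derive (fun s => val a b k X s x) t (val a b k (dt X) t x)).
  { intros x. apply val_dt. intros; auto. }
  split; [|split; [|split; [|split; [|split; [|split; [|split; [|split]]]]]]].
  - apply E1; auto.
  - intros x. unfold dx. apply is_derive_unique.
    eapply is_derive_ext. intros y; symmetry; apply E1; auto. apply val_dx.
  - intros x. unfold dt at 1. rewrite (Derive_ext_loc _ (fun s => val a b k X s x)).
    apply is_derive_unique; auto.
    apply (filter_imp (fun u => in_I t0 t1 u)). intros u Hu; apply E1; auto.
    apply I_locally; auto.
  - exact D1.
  - intros x. apply dv_dt. intros; auto.
  - intros x. apply val_c2d; auto.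
  - intros x. apply dv_c2d; auto.
  - intros x. apply val_c2d; auto.
  - intros x. apply dv_c2d; auto.
Qed.

Ltac isd := repeat match goal with
  | |- is_derive (val ?a ?b ?k ?Y ?u) _ _ => apply (val_dx a b k Y u)
  | |- is_derive (fun y => val ?a ?b ?k ?Y ?u y) _ _ => apply (val_dx a b k Y u)
  | |- is_derive (fun y => val ?a ?b ?k ?Y y ?x) ?u _ =>
      match goal with H : forall z, is_derive (fun s => val a b k Y s z) u _ |- _ => apply H end
  | |- is_derive (fun y => dv ?a ?b ?k ?Y y ?x) ?u _ =>
      match goal with H : forall z, is_derive (fun s => dv a b k Y s z) u _ |- _ => apply H end
  | |- is_derive (fun _ => ?c) _ _ => apply isd_const
  | |- is_derive (fun y => _ ^ 2) _ _ => eapply isd_pow2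
  | |- is_derive (fun y => _ - _) _ _ => eapply isd_minus
  | |- is_derive (fun y => _ + _) _ _ => eapply isd_plus
  | |- is_derive (fun y => _ * _) _ _ => eapply isd_mult
  end.

Ltac c2dleaf a b k Y t :=
  first [ match goal with H : forall z, continuity_2d_pt (fun u v => val a b k Y u v) t z |- _ => apply H end
        | match goal with H : forall z, continuity_2d_pt (val a b k Y) t z |- _ => apply H end ].
Ltac c2dleafd a b k Y t :=
  first [ match goal with H : forall z, continuity_2d_pt (fun u v => dv a b k Y u v) t z |- _ => apply H end
        | match goal with H : forall z, continuity_2d_pt (dv a b k Y) t z |- _ => apply H end ].

Ltac c2d := repeat match goal with
  | |- continuity_2d_pt (val ?a ?b ?k ?Y) ?t _ => c2dleaf a b k Y t
  | |- continuity_2d_pt (dv ?a ?b ?k ?Y) ?t _ => c2dleafd a b k Y t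
  | |- continuity_2d_pt (fun u v => val ?a ?b ?k ?Y u v) ?t _ => c2dleaf a b k Y t
  | |- continuity_2d_pt (fun u v => dv ?a ?b ?k ?Y u v) ?t _ => c2dleafd a b k Y t
  | |- continuity_2d_pt (fun _ _ => ?c) _ _ => apply continuity_2d_pt_const
  | |- continuity_2d_pt (fun u v => _ ^ 2) _ _ => apply c2d_pow2
  | |- continuity_2d_pt (fun u v => _ - _) _ _ => apply continuity_2d_pt_minus
  | |- continuity_2d_pt (fun u v => _ + _) _ _ => apply continuity_2d_pt_plus
  | |- continuity_2d_pt (fun u v => _ * _) _ _ => apply continuity_2d_pt_mult
  end.

Ltac cont2 := repeat (match goal with
  | |- Cont (fun _ => val _ _ _ _ _ _) => apply Cont_val
  | |- Cont (fun _ => dv _ _ _ _ _ _) => apply Cont_dv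
  | |- Cont (fun _ => Pk _ _ _ _ _) => apply Cont_Pk
  | |- Cont (val _ _ _ _ _) => apply Cont_val
  | |- Cont (dv _ _ _ _ _) => apply Cont_dv
  | |- Cont (Pk _ _ _ _) => apply Cont_Pk
  | |- Cont (fun _ => ?c) => apply Cont_const
  | |- Cont (fun _ => _ - _) => apply Cont_minus
  | |- Cont (fun _ => _ + _) => apply Cont_plus
  | |- Cont (fun _ => _ * _) => apply Cont_mult
  | |- Cont (fun _ => _ ^ _) => apply Cont_pow
  | |- Cont _ => assumption
  end).

Lemma RInt_periodic_deriv (K Kd : R -> R) a b :
  (forall x, is_derive K x (Kd x)) -> Cont Kd -> K b = K a -> RInt Kd a b = 0.
Proof. intros H1 H2 H3. rewrite (RInt_value K); auto. lra. Qed.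

Ltac rring := cbv beta; match goal with |- ?x = ?y => change (@eq R x y) end; first [ring | field].
Lemma mass_alg (V W Nu Om Vx Wx Nux Omx Vt Wt Nut Omt P1 P2 beta tau : R) :
  Vt = - Omx - beta * P1 -> Wt = Nux + beta * P2 ->
  tau * Nut = Wx - Om -> tau * Omt = - Vx + Nu ->
  2 * V * Vt + 2 * W * Wt + tau * (2 * Nu * Nut) + tau * (2 * Om * Omt) =
  (-2 * (Vx * Om + V * Omx) + 2 * (Wx * Nu + W * Nux)) +
  ((-2 * beta) * (V * P1 - V * ((V ^ 2 + W ^ 2) * W)) +
   (2 * beta) * (W * P2 - W * ((V ^ 2 + W ^ 2) * V))).
Proof.
  intros H1 H2 H3 H4.
  replace (tau * (2 * Nu * Nut)) with (2 * Nu * (tau * Nut)) by ring.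
  replace (tau * (2 * Om * Omt)) with (2 * Om * (tau * Omt)) by ring.
  rewrite H1, H2, H3, H4. ring.
Qed.

Lemma mom_alg (V W Nu Om Vx Wx Nux Omx Vt Wt Nut Omt Vxt Wxt Nuxt Omxt P1 P2 beta tau : R) :
  Vt = - Omx - beta * P1 -> Wt = Nux + beta * P2 ->
  tau * Nut = Wx - Om -> tau * Omt = - Vx + Nu ->
  Vt * Wx + V * Wxt - (Vxt * W + Vx * Wt) + tau * (Nut * Omx + Nu * Omxt)
    - tau * (Nuxt * Om + Nux * Omt) =
  (Vx * Wt + V * Wxt - (Vxt * W + Vt * Wx) + tau * (Nux * Omt + Nu * Omxt - (Nuxt * Om + Nut * Omx))
   - beta * (V ^ 2 + W ^ 2) * (2 * V * Vx + 2 * W * Wx) - 2 * Om * Omx - 2 * Nu * Nux) +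
  ((-2 * beta) * (Wx * P1 - Wx * ((V ^ 2 + W ^ 2) * W)) +
   (-2 * beta) * (Vx * P2 - Vx * ((V ^ 2 + W ^ 2) * V))).
Proof.
  intros H1 H2 H3 H4.
  assert (HW : Wx = tau * Nut + Om) by lra.
  assert (HV : Vx = Nu - tau * Omt) by lra.
  rewrite HW, HV, H1, H2. ring.
Qed.

Lemma energy_alg (V W Nu Om Vx Wx Nux Omx Vt Wt Nut Omt Vxt Wxt P1 P2 beta tau : R) :
  Vt = - Omx - beta * P1 -> Wt = Nux + beta * P2 ->
  tau * Nut = Wx - Om -> tau * Omt = - Vx + Nu ->
  2 * (Nut * Vx + Nu * Vxt) - 2 * Nu * Nut + 2 * (Omt * Wx + Om * Wxt) - 2 * Om * Omt
    - beta / 2 * (2 * (V ^ 2 + W ^ 2) * (2 * V * Vt + 2 * W * Wt)) =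
  (2 * (Nux * Vt + Nu * Vxt) + 2 * (Omx * Wt + Om * Wxt)) +
  ((2 * beta) * (Vt * P2 - Vt * ((V ^ 2 + W ^ 2) * V)) +
   (2 * beta) * (Wt * P1 - Wt * ((V ^ 2 + W ^ 2) * W))).
Proof.
  intros H1 H2 H3 H4.
  assert (HW : Wx = tau * Nut + Om) by lra.
  assert (HV : Vx = Nu - tau * Omt) by lra.
  assert (HNx : Nux = Wt - beta * P2) by lra.
  assert (HOx : Omx = - Vt - beta * P1) by lra.
  rewrite HW, HV, HNx, HOx. field.
Qed.
Lemma conserved a b t0 t1 (Q : R -> R) (f g : R -> R -> R) :
  (forall u, in_I t0 t1 u -> Q u = RInt (f u) a b) ->
  (forall t, in_I t0 t1 t -> forall x, is_derive (fun s => f s x) t (g t x)) ->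
  (forall t, in_I t0 t1 t -> forall x, continuity_2d_pt g t x) ->
  (forall u, Cont (f u)) ->
  (forall t, in_I t0 t1 t -> RInt (g t) a b = 0) ->
  forall t s, in_I t0 t1 t -> in_I t0 t1 s -> Q t = Q s.
Proof.
  intros HQ Hd Hc Hf H0 t s Ht Hs. rewrite HQ, (HQ s) by auto.
  apply (const_on_I (fun u => RInt (f u) a b) t0 t1); auto.
  intros u Hu. rewrite <- (H0 u Hu).
  apply (deriv_RInt f g a b u (in_I t0 t1)); auto.
  apply I_locally; auto.
Qed.

Lemma zero_decomp a b k (gg K Kd G1 G2 F1 F2 : R -> R) c1 c2 :
  (forall x, gg x = Kd x + (c1 * (G1 x * Pk a b k F1 x - G1 x * F1 x) +
                            c2 * (G2 x * Pk a b k F2 x - G2 x * F2 x))) ->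
  (forall x, is_derive K x (Kd x)) -> Cont Kd -> K b = K a ->
  Cont G1 -> Cont G2 -> Cont F1 -> Cont F2 ->
  RInt (fun x => G1 x * Pk a b k F1 x - G1 x * F1 x) a b = 0 ->
  RInt (fun x => G2 x * Pk a b k F2 x - G2 x * F2 x) a b = 0 ->
  RInt gg a b = 0.
Proof.
  intros Hg HK HKc HKp HG1 HG2 HF1 HF2 HP1 HP2.
  rewrite (RInt_ext_R gg _ a b Hg).
  assert (C1 : Cont (fun x => G1 x * Pk a b k F1 x - G1 x * F1 x)) by cont2.
  assert (C2 : Cont (fun x => G2 x * Pk a b k F2 x - G2 x * F2 x)) by cont2.
  assert (C3 : Cont (fun x => c1 * (G1 x * Pk a b k F1 x - G1 x * F1 x))) by (apply Cont_mult; auto; apply Cont_const).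
  assert (C4 : Cont (fun x => c2 * (G2 x * Pk a b k F2 x - G2 x * F2 x))) by (apply Cont_mult; auto; apply Cont_const).
  rewrite (RInt_plus' Kd _ a b HKc (Cont_plus _ _ C3 C4)).
  rewrite (RInt_plus' _ _ a b C3 C4).
  rewrite !RInt_scal' by auto. rewrite HP1, HP2.
  rewrite (RInt_periodic_deriv K Kd) by auto.
  change (0 + (c1 * 0 + c2 * 0) = (0:R)). ring.
Qed.

Lemma proj_val a b k Y u F : a < b -> Cont F ->
  RInt (fun x => val a b k Y u x * Pk a b k F x - val a b k Y u x * F x) a b = 0.
Proof. intros; apply proj_id; auto. Qed.

Lemma proj_dv a b k Y u F : a < b -> Cont F ->
  RInt (fun x => dv a b k Y u x * Pk a b k F x - dv a b k Y u x * F x) a b = 0.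
Proof. intros; apply proj_id; auto. Qed.
Theorem theorem6p1 (a b : R) (k : nat) (beta tau : R) (t0 t1 : Rbar)
  (v w nu om : R -> R -> R) :
  a < b -> 0 < tau -> Rbar_lt t0 t1 ->
  (* the solution takes values in T_k^4 *)
  (forall t, in_I t0 t1 t ->
     in_Tk a b k (v t) /\ in_Tk a b k (w t) /\
     in_Tk a b k (nu t) /\ in_Tk a b k (om t)) ->
  (* continuously differentiable in time *)
  (forall t x, in_I t0 t1 t ->
     ex_derive (fun s => v s x) t /\ ex_derive (fun s => w s x) t /\
     ex_derive (fun s => nu s x) t /\ ex_derive (fun s => om s x) t) ->
  (forall t x, in_I t0 t1 t ->
     continuous (fun s => dt v s x) t /\ continuous (fun s => dt w s x) t /\
     continuous (fun s => dt nu s x) t /\ continuous (fun s => dt om s x) t) ->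
  (* the Fourier Galerkin semidiscretization *)
  (forall t x, in_I t0 t1 t ->
     dt v t x = - dx om t x
                - beta * Pk a b k (fun y => (v t y ^ 2 + w t y ^ 2) * w t y) x /\
     dt w t x = dx nu t x
                + beta * Pk a b k (fun y => (v t y ^ 2 + w t y ^ 2) * v t y) x /\
     tau * dt nu t x = dx w t x - om t x /\
     tau * dt om t x = - dx v t x + nu t x) ->
  forall t s, in_I t0 t1 t -> in_I t0 t1 s ->
    mass a b tau v w nu om t = mass a b tau v w nu om s /\
    momentum a b tau v w nu om t = momentum a b tau v w nu om s /\
    energy a b beta v w nu om t = energy a b beta v w nu om s.
Proof.
  intros Hab Htau Ht01 HT Hex Hct Hode.
  pose proof (field_facts a b k t0 t1 v Hab (fun t Ht => proj1 (HT t Ht))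
    (fun t x Ht => proj1 (Hex t x Ht)) (fun t x Ht => proj1 (Hct t x Ht))) as Fv.
  pose proof (field_facts a b k t0 t1 w Hab (fun t Ht => proj1 (proj2 (HT t Ht)))
    (fun t x Ht => proj1 (proj2 (Hex t x Ht))) (fun t x Ht => proj1 (proj2 (Hct t x Ht)))) as Fw.
  pose proof (field_facts a b k t0 t1 nu Hab (fun t Ht => proj1 (proj2 (proj2 (HT t Ht))))
    (fun t x Ht => proj1 (proj2 (proj2 (Hex t x Ht)))) (fun t x Ht => proj1 (proj2 (proj2 (Hct t x Ht))))) as Fn.
  pose proof (field_facts a b k t0 t1 om Hab (fun t Ht => proj2 (proj2 (proj2 (HT t Ht))))
    (fun t x Ht => proj2 (proj2 (proj2 (Hex t x Ht)))) (fun t x Ht => proj2 (proj2 (proj2 (Hct t x Ht))))) as Fo.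
  clear HT Hex Hct.
  assert (Hode' : forall t x, in_I t0 t1 t ->
     val a b k (dt v) t x = - dv a b k om t x
        - beta * Pk a b k (fun y => (val a b k v t y ^ 2 + val a b k w t y ^ 2) * val a b k w t y) x /\
     val a b k (dt w) t x = dv a b k nu t x
        + beta * Pk a b k (fun y => (val a b k v t y ^ 2 + val a b k w t y ^ 2) * val a b k v t y) x /\
     tau * val a b k (dt nu) t x = dv a b k w t x - val a b k om t x /\
     tau * val a b k (dt om) t x = - dv a b k v t x + val a b k nu t x).
  { intros t x Ht. specialize (Hode t x Ht).
    destruct (Fv t Ht) as [Ev1 [Ev2 [Ev3 _]]]. destruct (Fw t Ht) as [Ew1 [Ew2 [Ew3 _]]].
    destruct (Fn t Ht) as [En1 [En2 [En3 _]]]. destruct (Fo t Ht) as [Eo1 [Eo2 [Eo3 _]]].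
    rewrite Ev3, Ew3, En3, Eo3, Ev2, Ew2, En2, Eo2, En1, Eo1 in Hode.
    assert (Ev : v t = val a b k v t) by (apply functional_extensionality; exact Ev1).
    assert (Ew : w t = val a b k w t) by (apply functional_extensionality; exact Ew1).
    rewrite Ev, Ew in Hode. exact Hode. }
  intros t s Ht Hs. split; [|split].
  -
    apply (conserved a b t0 t1 _
      (fun u x => val a b k v u x ^ 2 + val a b k w u x ^ 2 + tau * val a b k nu u x ^ 2 + tau * val a b k om u x ^ 2)
      (fun u x => 2 * val a b k v u x * val a b k (dt v) u x + 2 * val a b k w u x * val a b k (dt w) u x
         + tau * (2 * val a b k nu u x * val a b k (dt nu) u x) + tau * (2 * val a b k om u x * val a b k (dt om) u x))); auto.
    + intros u Hu. unfold mass. apply RInt_ext_R. intros x.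
      rewrite (proj1 (Fv u Hu)), (proj1 (Fw u Hu)), (proj1 (Fn u Hu)), (proj1 (Fo u Hu)). reflexivity.
    + intros u Hu x. destruct (Fv u Hu) as [_ [_ [_ [Dv _]]]]. destruct (Fw u Hu) as [_ [_ [_ [Dw _]]]].
      destruct (Fn u Hu) as [_ [_ [_ [Dn _]]]]. destruct (Fo u Hu) as [_ [_ [_ [Do _]]]].
      eapply isd_eq. isd. rring.
    + intros u Hu x. destruct (Fv u Hu) as [_ [_ [_ [_ [_ [Cv1 [_ [Cv2 _]]]]]]]].
      destruct (Fw u Hu) as [_ [_ [_ [_ [_ [Cw1 [_ [Cw2 _]]]]]]]].
      destruct (Fn u Hu) as [_ [_ [_ [_ [_ [Cn1 [_ [Cn2 _]]]]]]]].
      destruct (Fo u Hu) as [_ [_ [_ [_ [_ [Co1 [_ [Co2 _]]]]]]]].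
      c2d.
    + intros u. cont2.
    + intros u Hu.
      apply (zero_decomp a b k _
        (fun x => -2 * (val a b k v u x * val a b k om u x) + 2 * (val a b k w u x * val a b k nu u x))
        (fun x => -2 * (dv a b k v u x * val a b k om u x + val a b k v u x * dv a b k om u x)
                  + 2 * (dv a b k w u x * val a b k nu u x + val a b k w u x * dv a b k nu u x))
        (val a b k v u) (val a b k w u)
        (fun y => (val a b k v u y ^ 2 + val a b k w u y ^ 2) * val a b k w u y)
        (fun y => (val a b k v u y ^ 2 + val a b k w u y ^ 2) * val a b k v u y)
        (-2 * beta) (2 * beta)).
      * intros x. destruct (Hode' u x Hu) as [O1 [O2 [O3 O4]]]. apply mass_alg; auto.
      * intros x. eapply isd_eq. isd. rring.
      * cont2.
      * rewrite !(fun Y u => val_period a b k Y u Hab). reflexivity.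
      * cont2.
      * cont2.
      * cont2.
      * cont2.
      * apply proj_val; auto. cont2.
      * apply proj_val; auto. cont2.
  -
    apply (conserved a b t0 t1 _
      (fun u x => val a b k v u x * dv a b k w u x - dv a b k v u x * val a b k w u x
         + tau * val a b k nu u x * dv a b k om u x - tau * dv a b k nu u x * val a b k om u x)
      (fun u x => val a b k (dt v) u x * dv a b k w u x + val a b k v u x * dv a b k (dt w) u x
         - (dv a b k (dt v) u x * val a b k w u x + dv a b k v u x * val a b k (dt w) u x)
         + tau * (val a b k (dt nu) u x * dv a b k om u x + val a b k nu u x * dv a b k (dt om) u x)
         - tau * (dv a b k (dt nu) u x * val a b k om u x + dv a b k nu u x * val a b k (dt om) u x))); auto.
    + intros u Hu. unfold momentum. apply RInt_ext_R. intros x.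
      destruct (Fv u Hu) as [Ev1 [Ev2 _]]. destruct (Fw u Hu) as [Ew1 [Ew2 _]].
      destruct (Fn u Hu) as [En1 [En2 _]]. destruct (Fo u Hu) as [Eo1 [Eo2 _]].
      rewrite Ev1, Ev2, Ew1, Ew2, En1, En2, Eo1, Eo2. reflexivity.
    + intros u Hu x. destruct (Fv u Hu) as [_ [_ [_ [Dv [Dv' _]]]]]. destruct (Fw u Hu) as [_ [_ [_ [Dw [Dw' _]]]]].
      destruct (Fn u Hu) as [_ [_ [_ [Dn [Dn' _]]]]]. destruct (Fo u Hu) as [_ [_ [_ [Do [Do' _]]]]].
      eapply isd_eq. isd. rring.
    + intros u Hu x. destruct (Fv u Hu) as [_ [_ [_ [_ [_ [Cv1 [Cv3 [Cv2 Cv4]]]]]]]].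
      destruct (Fw u Hu) as [_ [_ [_ [_ [_ [Cw1 [Cw3 [Cw2 Cw4]]]]]]]].
      destruct (Fn u Hu) as [_ [_ [_ [_ [_ [Cn1 [Cn3 [Cn2 Cn4]]]]]]]].
      destruct (Fo u Hu) as [_ [_ [_ [_ [_ [Co1 [Co3 [Co2 Co4]]]]]]]].
      c2d.
    + intros u. cont2.
    + intros u Hu.
      apply (zero_decomp a b k _
        (fun x => val a b k v u x * val a b k (dt w) u x - val a b k (dt v) u x * val a b k w u x
           + tau * (val a b k nu u x * val a b k (dt om) u x - val a b k (dt nu) u x * val a b k om u x)
           - beta / 2 * (val a b k v u x ^ 2 + val a b k w u x ^ 2) ^ 2
           - val a b k om u x ^ 2 - val a b k nu u x ^ 2)
        (fun x => dv a b k v u x * val a b k (dt w) u x + val a b k v u x * dv a b k (dt w) u x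
           - (dv a b k (dt v) u x * val a b k w u x + val a b k (dt v) u x * dv a b k w u x)
           + tau * (dv a b k nu u x * val a b k (dt om) u x + val a b k nu u x * dv a b k (dt om) u x
                    - (dv a b k (dt nu) u x * val a b k om u x + val a b k (dt nu) u x * dv a b k om u x))
           - beta * (val a b k v u x ^ 2 + val a b k w u x ^ 2)
               * (2 * val a b k v u x * dv a b k v u x + 2 * val a b k w u x * dv a b k w u x)
           - 2 * val a b k om u x * dv a b k om u x - 2 * val a b k nu u x * dv a b k nu u x)
        (dv a b k w u) (dv a b k v u)
        (fun y => (val a b k v u y ^ 2 + val a b k w u y ^ 2) * val a b k w u y)
        (fun y => (val a b k v u y ^ 2 + val a b k w u y ^ 2) * val a b k v u y)
        (-2 * beta) (-2 * beta)).
      * intros x. destruct (Hode' u x Hu) as [O1 [O2 [O3 O4]]]. apply mom_alg; auto.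
      * intros x. eapply isd_eq. isd. rring.
      * cont2.
      * rewrite !(fun Y u => val_period a b k Y u Hab). reflexivity.
      * cont2.
      * cont2.
      * cont2.
      * cont2.
      * apply proj_dv; auto. cont2.
      * apply proj_dv; auto. cont2.
  -
    apply (conserved a b t0 t1 _
      (fun u x => 2 * val a b k nu u x * dv a b k v u x - val a b k nu u x ^ 2
         + 2 * val a b k om u x * dv a b k w u x - val a b k om u x ^ 2
         - beta / 2 * (val a b k v u x ^ 2 + val a b k w u x ^ 2) ^ 2)
      (fun u x => 2 * (val a b k (dt nu) u x * dv a b k v u x + val a b k nu u x * dv a b k (dt v) u x)
         - 2 * val a b k nu u x * val a b k (dt nu) u x
         + 2 * (val a b k (dt om) u x * dv a b k w u x + val a b k om u x * dv a b k (dt w) u x)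
         - 2 * val a b k om u x * val a b k (dt om) u x
         - beta / 2 * (2 * (val a b k v u x ^ 2 + val a b k w u x ^ 2)
             * (2 * val a b k v u x * val a b k (dt v) u x + 2 * val a b k w u x * val a b k (dt w) u x)))); auto.
    + intros u Hu. unfold energy. apply RInt_ext_R. intros x.
      destruct (Fv u Hu) as [Ev1 [Ev2 _]]. destruct (Fw u Hu) as [Ew1 [Ew2 _]].
      destruct (Fn u Hu) as [En1 [En2 _]]. destruct (Fo u Hu) as [Eo1 [Eo2 _]].
      rewrite Ev1, Ev2, Ew1, Ew2, En1, Eo1. reflexivity.
    + intros u Hu x. destruct (Fv u Hu) as [_ [_ [_ [Dv [Dv' _]]]]]. destruct (Fw u Hu) as [_ [_ [_ [Dw [Dw' _]]]]].
      destruct (Fn u Hu) as [_ [_ [_ [Dn [Dn' _]]]]]. destruct (Fo u Hu) as [_ [_ [_ [Do [Do' _]]]]].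
      eapply isd_eq. isd. rring.
    + intros u Hu x. destruct (Fv u Hu) as [_ [_ [_ [_ [_ [Cv1 [Cv3 [Cv2 Cv4]]]]]]]].
      destruct (Fw u Hu) as [_ [_ [_ [_ [_ [Cw1 [Cw3 [Cw2 Cw4]]]]]]]].
      destruct (Fn u Hu) as [_ [_ [_ [_ [_ [Cn1 [Cn3 [Cn2 Cn4]]]]]]]].
      destruct (Fo u Hu) as [_ [_ [_ [_ [_ [Co1 [Co3 [Co2 Co4]]]]]]]].
      c2d.
    + intros u. cont2.
    + intros u Hu.
      apply (zero_decomp a b k _
        (fun x => 2 * val a b k nu u x * val a b k (dt v) u x + 2 * val a b k om u x * val a b k (dt w) u x)
        (fun x => 2 * (dv a b k nu u x * val a b k (dt v) u x + val a b k nu u x * dv a b k (dt v) u x)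
           + 2 * (dv a b k om u x * val a b k (dt w) u x + val a b k om u x * dv a b k (dt w) u x))
        (val a b k (dt v) u) (val a b k (dt w) u)
        (fun y => (val a b k v u y ^ 2 + val a b k w u y ^ 2) * val a b k v u y)
        (fun y => (val a b k v u y ^ 2 + val a b k w u y ^ 2) * val a b k w u y)
        (2 * beta) (2 * beta)).
      * intros x. destruct (Hode' u x Hu) as [O1 [O2 [O3 O4]]]. apply energy_alg with (tau := tau); auto.
      * intros x. eapply isd_eq. isd. rring.
      * cont2.
      * rewrite !(fun Y u => val_period a b k Y u Hab). reflexivity.
      * cont2.
      * cont2.
      * cont2.
      * cont2.
      * apply proj_val; auto. cont2.
      * apply proj_val; auto. cont2.
Qed.
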